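(* Let $n\ge 1$ be an integer and $p\in\mathbb{R}$ with $p\neq 1$. Let $w$ be the fundamental solution of the $p$-Laplace equation in $\mathbb{R}^n$, i.e. \[w(x)=-c_{n,p}\tfrac{p-1}{p-n}|x|^{\frac{p-n}{p-1}}\ \text{ if } p\neq n,\qquad w(x)=-c_{n,n}\ln|x|\ \text{ if } p=n,\] where $c_{n,p}>0$ is a constant. Let $N\ge1$, $a_1,\dots,a_N>0$, $y_1,\dots,y_N\in\mathbb{R}^n$, and $V(x):=\sum_{i=1}^N a_i w(x-y_i)$. Then, at all points $x\in\mathbb{R}^n\setminus\{y_1,\dots,y_N\}$ where $\nabla V(x)\neq 0$ (so that $\Delta_pV(x)$ is defined), $\Delta_p V(x)$ has one and the same sign, namely: if $n=1$ or $p=2$ or $p+n=2$, then $\Delta_pV=0$; otherwise, $\Delta_pV\le 0$ at all such points when $\frac{(p-2)(p+n-2)}{p-1}>0$, and $\Delta_pV\ge 0$ at all such points when $\frac{(p-2)(p+n-2)}{p-1}<0$.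
   Context: For a function $u$ that is $C^2$ near $x$ with $\nabla u(x)\neq0$, the $p$-Laplacian is $\Delta_p u=\operatorname{div}(|\nabla u|^{p-2}\nabla u)=|\nabla u|^{p-2}\Big((p-2)\frac{\nabla u\,(\mathcal{H}u)\,\nabla u^T}{|\nabla u|^2}+\Delta u\Big)$, where $\mathcal{H}u$ is the Hessian matrix of $u$ and $\nabla u$ is a row vector. *)

(* Defs.v *)
From HB Require Import structures.
From mathcomp Require Import all_boot all_order all_algebra.
From mathcomp Require Import all_classical all_reals all_analysis.
Set Implicit Arguments. Unset Strict Implicit. Unset Printing Implicit Defensive.
Import Order.TTheory GRing.Theory Num.Theory.
Import numFieldNormedType.Exports.
Local Open Scope ring_scope.

Definition enorm (R : realType) (n : nat) (x : 'rV[R]_n) : R :=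
  Num.sqrt (\sum_(i < n) x ord0 i ^+ 2).

Definition evec (R : realType) (n : nat) (i : 'I_n) : 'rV[R]_n := delta_mx ord0 i.

Definition grad (R : realType) (n : nat) (f : 'rV[R]_n -> R) (x : 'rV[R]_n) : 'rV[R]_n :=
  \row_(i < n) ('D_(evec R i) f x).

Definition hessian (R : realType) (n : nat) (f : 'rV[R]_n -> R) (x : 'rV[R]_n) : 'M[R]_n :=
  \matrix_(i < n, j < n) ('D_(evec R j) (fun z => 'D_(evec R i) f z) x).

Definition laplacian (R : realType) (n : nat) (f : 'rV[R]_n -> R) (x : 'rV[R]_n) : R :=
  \tr (hessian f x).

(* p-Laplacian at a point where the gradient is nonzero:
   |Du|^(p-2) ((p-2) Du Hu Du^T / |Du|^2 + Delta u) *)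
Definition plaplacian (R : realType) (n : nat) (p : R) (f : 'rV[R]_n -> R) (x : 'rV[R]_n) : R :=
  let g := grad f x in
  (enorm g) `^ (p - 2) *
    ((p - 2) * ((g *m hessian f x *m g^T) ord0 ord0) / (enorm g) ^+ 2 + laplacian f x).

Definition fundsol (R : realType) (n : nat) (p c : R) (x : 'rV[R]_n) : R :=
  if p == n%:R then - c * ln (enorm x)
  else - c * ((p - 1) / (p - n%:R)) * (enorm x) `^ ((p - n%:R) / (p - 1)).

Definition Vpot (R : realType) (n N : nat) (p c : R) (a : 'I_N -> R) (y : 'I_N -> 'rV[R]_n)
  (x : 'rV[R]_n) : R :=
  \sum_(i < N) a i * @fundsol R n p c (x - y i).

(* Main.v *)
Require Import Defs.
From HB Require Import structures.
From mathcomp Require Import all_boot all_order all_algebra.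
From mathcomp Require Import all_classical all_reals all_analysis.
From mathcomp Require Import ring lra zify.
Import Order.TTheory GRing.Theory Num.Theory.
Import numFieldNormedType.Exports.
Local Open Scope ring_scope.
Set Implicit Arguments. Unset Strict Implicit.


Lemma derive1P' (R : realType) (V : normedModType R) (f : V -> R) x v :
  'D_v f x = 'D_1 (fun h : R => f (h *: v + x)) 0.
Proof.
rewrite /derive; set g1 := fun h => h^-1 *: _; set g2 := fun h => h^-1 *: _.
suff -> : g1 = g2 by [].
by rewrite funeqE /g1 /g2 => h /=; rewrite addr0 scale0r add0r [_%:A]mulr1.
Qed.

Lemma is_derive1P (R : realType) (V : normedModType R) (f : V -> R) x v df :
  is_derive x v f df <-> is_derive (0:R) 1 (fun h : R => f (h *: v + x)) df.
Proof.
split=> -[d e]; split.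
- by apply/(derivable1P f x v).
- by rewrite -derive1P'.
- by apply/(derivable1P f x v).
- by rewrite derive1P'.
Qed.

Lemma is_derive_compR (R : realType) (V : normedModType R) (q : V -> R) (F : R -> R) z v dq dF :
  is_derive z v q dq -> is_derive (q z) 1 F dF -> is_derive z v (F \o q) (dF * dq).
Proof.
move=> /is_derive1P hq hF; apply/is_derive1P.
have hF' : is_derive ((fun h : R => q (h *: v + z)) 0) 1 F dF.
  by rewrite /= scale0r add0r.
exact: (@is_derive1_comp R F (fun h : R => q (h *: v + z)) 0 dF dq hF' hq).
Qed.


Definition qf (R : realType) (n : nat) (u : 'rV[R]_n) : R := \sum_(k < n) u ord0 k ^+ 2.
Definition ee (R : realType) (n : nat) (p : R) : R := - (p + n%:R - 2) / (2 * (p - 1)).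
Definition Fq (R : realType) (n : nat) (p c : R) (t : R) : R :=
  if p == n%:R then - c * (ln t / 2)
  else - c * ((p - 1) / (p - n%:R)) * t `^ ((p - n%:R) / (p - 1) / 2).
Definition Fd (R : realType) (n : nat) (p c : R) (t : R) : R := - c / 2 * t `^ (ee n p).
Definition Fdd (R : realType) (n : nat) (p c : R) (t : R) : R :=
  - c / 2 * (ee n p * t `^ (ee n p - 1)).

Lemma qf_ge0 (R : realType) (n : nat) (u : 'rV[R]_n) : 0 <= qf u.
Proof. by apply: sumr_ge0 => k _; rewrite sqr_ge0. Qed.

Lemma fundsolE (R : realType) (n : nat) (p c : R) (u : 'rV[R]_n) :
  fundsol p c u = Fq n p c (qf u).
Proof.
rewrite /fundsol /Fq /enorm -/(qf u) -powR12_sqrt ?qf_ge0 //.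
case: ifP => _; first by rewrite ln_powR; congr (_ * _); rewrite mulrC.
by rewrite -powRrM [_ / 2]mulrC.
Qed.

Lemma is_deriveKl (R : realType) (f : R -> R) (k x v d : R) :
  is_derive x v f d -> is_derive x v (fun z => k * f z) (k * d).
Proof. by move=> h; exact: (is_deriveZ k h). Qed.

Lemma is_deriveKr (R : realType) (f : R -> R) (k x v d : R) :
  is_derive x v f d -> is_derive x v (fun z => f z * k) (d * k).
Proof.
move=> h; have := is_deriveKl k h.
by rewrite mulrC; under eq_fun do rewrite mulrC.
Qed.

Lemma Fq_deriv (R : realType) (n : nat) (p c t : R) : p != 1 -> 0 < t ->
  is_derive t 1 (Fq n p c) (Fd n p c t).
Proof.
move=> p1 t0; have p10 : p - 1 != 0 by rewrite subr_eq0.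
rewrite /Fd; have [pn|pn] := eqVneq p n%:R.
  rewrite /Fq pn eqxx.
  apply: is_derive_eq; first exact/is_deriveKl/is_deriveKr/is_derive1_ln.
  have -> : ee n (n%:R : R) = -1.
    by rewrite /ee -pn; field.
  rewrite powRN powRr1; last exact: ltW.
  by field; rewrite gt_eqF.
rewrite /Fq (negbTE pn).
apply: (is_derive_eq (is_deriveKl _ (is_derive1_powR _ t0))).
have pn0 : p - n%:R != 0 by rewrite subr_eq0.
rewrite /ee.
have -> : (p - n%:R) / (p - 1) / 2 - 1 = - (p + n%:R - 2) / (2 * (p - 1)) by field.
by field; rewrite pn0 p10.
Qed.

Lemma Fd_deriv (R : realType) (n : nat) (p c t : R) : 0 < t ->
  is_derive t 1 (Fd n p c) (Fdd n p c t).
Proof. move=> t0; exact: (is_deriveKl _ (is_derive1_powR _ t0)). Qed.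


Lemma near_neq (R : realType) (V : normedModType R) (x y : V) :
  x != y -> \forall z \near x, z != y.
Proof.
move=> xy.
have hc : closed [set y] := @accessible_closed_set1 V (@hausdorff_accessible V (@norm_hausdorff _ V)) y.
have o := closed_openC hc.
apply: filterS (open_nbhs_nbhs (conj o _)) => [z /= zy|]; first by apply/eqP.
by move=> /= /eqP; rewrite (negbTE xy).
Qed.

Lemma is_deriveKlV (R : realType) (V : normedModType R) (f : V -> R) (k : R) x v d :
  is_derive x v f d -> is_derive x v (fun z => k * f z) (k * d).
Proof. by move=> h; exact: (is_deriveZ k h). Qed.

Lemma is_deriveMV (R : realType) (V : normedModType R) (f g : V -> R) x v df dg :
  is_derive x v f df -> is_derive x v g dg ->
  is_derive x v (fun z => f z * g z) (f x * dg + g x * df).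
Proof. by move=> hf hg; exact: (is_deriveM hf hg). Qed.

Lemma is_deriveDV (R : realType) (V : normedModType R) (f g : V -> R) x v df dg :
  is_derive x v f df -> is_derive x v g dg ->
  is_derive x v (fun z => f z + g z) (df + dg).
Proof. by move=> hf hg; exact: (is_deriveD hf hg). Qed.

Lemma is_deriveSum (R : realType) (V : normedModType R) m (h : 'I_m -> V -> R) x v dh :
  (forall i, is_derive x v (h i) (dh i)) ->
  is_derive x v (fun z => \sum_(i < m) h i z) (\sum_(i < m) dh i).
Proof.
move=> H; have := is_derive_sum H.
by rewrite (_ : \sum_(i < m) h i = (fun z => \sum_(i < m) h i z)) // funeqE => z; rewrite fct_sumE.
Qed.

Lemma is_derive_coord (R : realType) (n : nat) (y z v : 'rV[R]_n) (k : 'I_n) :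
  is_derive z v (fun w : 'rV[R]_n => (w - y) ord0 k) (v ord0 k).
Proof.
apply/is_derive1P.
rewrite (_ : (fun h : R => _) = (fun h : R => h * v ord0 k + (z - y) ord0 k)); last first.
  by rewrite funeqE => h; rewrite !mxE addrA.
apply: (is_derive_eq (is_deriveDV (is_deriveKr (v ord0 k) (is_derive_id (0:R) 1)) (is_derive_cst ((z - y) ord0 k) (0:R) 1))).
by rewrite mul1r addr0.
Qed.

Lemma is_derive_qf (R : realType) (n : nat) (y z v : 'rV[R]_n) :
  is_derive z v (fun w : 'rV[R]_n => qf (w - y)) (2 * \sum_(k < n) (z - y) ord0 k * v ord0 k).
Proof.
rewrite /qf.
apply: (is_derive_eq (is_deriveSum (fun k => is_deriveMV (is_derive_coord y z v k) (is_derive_coord y z v k)))).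
rewrite mulr_sumr; apply: eq_bigr => k _; ring.
Qed.


Lemma qf_gt0 (R : realType) (n : nat) (u : 'rV[R]_n) : u != 0 -> 0 < qf u.
Proof.
move=> u0; rewrite lt_neqAle qf_ge0 andbT eq_sym; apply: contra u0 => /eqP q0.
apply/eqP/matrixP => i j; rewrite (ord1 i) mxE.
have := @psumr_eq0P _ _ predT (fun k => u ord0 k ^+ 2) (fun k _ => sqr_ge0 _) q0 j isT.
by move/eqP; rewrite sqrf_eq0 => /eqP.
Qed.

Lemma evecE (R : realType) (n : nat) (i k : 'I_n) : evec R i ord0 k = (i == k)%:R.
Proof. by rewrite /evec mxE eqxx /= eq_sym. Qed.

Lemma sum_evec (R : realType) (n : nat) (u : 'I_n -> R) (i : 'I_n) :
  \sum_(k < n) u k * evec R i ord0 k = u i.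
Proof.
rewrite (bigD1 i) //= big1 => [|k ki]; first by rewrite evecE eqxx mulr1 addr0.
by rewrite evecE eq_sym (negbTE ki) mulr0.
Qed.

Lemma VpotE (R : realType) (n N : nat) (p c : R) (a : 'I_N -> R) (y : 'I_N -> 'rV[R]_n) :
  Vpot p c a y = fun z => \sum_(l < N) a l * Fq n p c (qf (z - y l)).
Proof. by rewrite funeqE => z; apply: eq_bigr => l _; rewrite fundsolE. Qed.

Definition D1 (R : realType) (n N : nat) (p c : R) (a : 'I_N -> R) (y : 'I_N -> 'rV[R]_n)
  (i : 'I_n) (z : 'rV[R]_n) : R :=
  \sum_(l < N) a l * (Fd n p c (qf (z - y l)) * (2 * (z - y l) ord0 i)).

Lemma is_derive_V1 (R : realType) (n N : nat) (p c : R) (a : 'I_N -> R) (y : 'I_N -> 'rV[R]_n)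
  (i : 'I_n) (z : 'rV[R]_n) : p != 1 -> (forall l, z != y l) ->
  is_derive z (evec R i) (Vpot p c a y) (D1 p c a y i z).
Proof.
move=> p1 zy; rewrite VpotE; apply: is_deriveSum => l.
have q0 : 0 < qf (z - y l) by apply: qf_gt0; rewrite subr_eq0.
have := is_deriveKlV (a l) (is_derive_compR (is_derive_qf (y l) z (evec R i)) (Fq_deriv n c p1 q0)).
by rewrite (sum_evec (fun k => (z - y l) ord0 k)).
Qed.

Lemma near_D1 (R : realType) (n N : nat) (p c : R) (a : 'I_N -> R) (y : 'I_N -> 'rV[R]_n)
  (i : 'I_n) (x : 'rV[R]_n) : p != 1 -> (forall l, x != y l) ->
  \forall z \near x, D1 p c a y i z = 'D_(evec R i) (Vpot p c a y) z.
Proof.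
move=> p1 xy.
have : \forall z \near x, forall l, z != y l.
  exact: (@filter_forall _ _ (fun l z => z != y l) (nbhs x) _ (fun l => near_neq (xy l))).
apply: filterS => z zy.
by have [_ ->] := is_derive_V1 c a i p1 zy.
Qed.

Definition H2 (R : realType) (n N : nat) (p c : R) (a : 'I_N -> R) (y : 'I_N -> 'rV[R]_n)
  (i j : 'I_n) (x : 'rV[R]_n) : R :=
  \sum_(l < N) a l * (Fd n p c (qf (x - y l)) * (2 * (i == j)%:R)
     + 2 * (x - y l) ord0 i * (Fdd n p c (qf (x - y l)) * (2 * (x - y l) ord0 j))).

Lemma hessianE (R : realType) (n N : nat) (p c : R) (a : 'I_N -> R) (y : 'I_N -> 'rV[R]_n)
  (x : 'rV[R]_n) (i j : 'I_n) : p != 1 -> (forall l, x != y l) ->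
  hessian (Vpot p c a y) x i j = H2 p c a y i j x.
Proof.
move=> p1 xy; rewrite /hessian mxE.
rewrite -(near_eq_derive _ (near_D1 c a i p1 xy)).
suff : is_derive x (evec R j) (D1 p c a y i) (H2 p c a y i j x) by case.
rewrite /D1 /H2; apply: is_deriveSum => l.
have q0 : 0 < qf (x - y l) by apply: qf_gt0; rewrite subr_eq0.
have hF := is_derive_compR (is_derive_qf (y l) x (evec R j)) (Fd_deriv n p c q0).
have hc := is_deriveKlV 2 (is_derive_coord (y l) x (evec R j) i).
have := is_deriveKlV (a l) (is_deriveMV hF hc).
rewrite (sum_evec (fun k => (x - y l) ord0 k)) evecE.
by rewrite eq_sym.
Qed.


Lemma sum_delta (R : ringType) n (f : 'I_n -> R) (i : 'I_n) :
  \sum_(j < n) f j * (i == j)%:R = f i.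
Proof.
rewrite (bigD1 i) //= big1 => [|k ki]; first by rewrite eqxx mulr1 addr0.
by rewrite eq_sym (negbTE ki) mulr0.
Qed.

Lemma sqr_sum (R : comRingType) n (f : 'I_n -> R) :
  (\sum_(i < n) f i) ^+ 2 = \sum_(i < n) \sum_(j < n) f i * f j.
Proof. by rewrite expr2 mulr_suml; apply: eq_bigr => i _; rewrite mulr_sumr. Qed.

Lemma pl_lagrange (R : comRingType) n (g u : 'I_n -> R) :
  \sum_(i < n) \sum_(j < n) (g i * u j - g j * u i) ^+ 2 =
  2 * ((\sum_(k < n) g k ^+ 2) * (\sum_(k < n) u k ^+ 2) - (\sum_(k < n) g k * u k) ^+ 2).
Proof.
have E : forall i j, (g i * u j - g j * u i) ^+ 2 =
   g i ^+ 2 * u j ^+ 2 + g j ^+ 2 * u i ^+ 2 - 2 * ((g i * u i) * (g j * u j)).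
  by move=> i j; ring.
under eq_bigr => i _ do under eq_bigr => j _ do rewrite E.
under eq_bigr => i _ do rewrite sumrB big_split /=.
rewrite sumrB big_split /= sqr_sum.
rewrite [X in _ + X - _]exchange_big /=.
have -> : \sum_(i < n) \sum_(j < n) g i ^+ 2 * u j ^+ 2 =
   (\sum_(k < n) g k ^+ 2) * (\sum_(k < n) u k ^+ 2).
  by rewrite mulr_suml; apply: eq_bigr => i _; rewrite mulr_sumr.
have -> : \sum_(i < n) \sum_(j < n) 2 * (g i * u i * (g j * u j)) =
   2 * \sum_(i < n) \sum_(j < n) (g i * u i * (g j * u j)).
  by rewrite mulr_sumr; apply: eq_bigr => i _; rewrite mulr_sumr.
ring.
Qed.

Lemma cs_ge0 (R : realDomainType) n (g u : 'I_n -> R) :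
  0 <= (\sum_(k < n) g k ^+ 2) * (\sum_(k < n) u k ^+ 2) - (\sum_(k < n) g k * u k) ^+ 2.
Proof.
have := pl_lagrange g u.
have : 0 <= \sum_(i < n) \sum_(j < n) (g i * u j - g j * u i) ^+ 2.
  by apply: sumr_ge0 => i _; apply: sumr_ge0 => j _; exact: sqr_ge0.
move=> h E; rewrite E in h; set X := _ - _ in h *; nra.
Qed.

Lemma cs_n1 (R : comRingType) (g u : 'I_1 -> R) :
  (\sum_(k < 1) g k ^+ 2) * (\sum_(k < 1) u k ^+ 2) - (\sum_(k < 1) g k * u k) ^+ 2 = 0.
Proof. rewrite !big_ord1; ring. Qed.


Definition Hm (R : ringType) n N (a F1 F2 : 'I_N -> R) (u : 'I_N -> 'I_n -> R) (i j : 'I_n) : R :=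
  \sum_(l < N) a l * (F1 l * (2 * (i == j)%:R) + 2 * u l i * (F2 l * (2 * u l j))).

Lemma quad_sum (R : comRingType) n N (a F1 F2 : 'I_N -> R) (u : 'I_N -> 'I_n -> R) (g : 'I_n -> R) :
  \sum_(i < n) \sum_(j < n) g i * Hm a F1 F2 u i j * g j =
  \sum_(l < N) a l * (2 * F1 l * (\sum_(k < n) g k ^+ 2) + 4 * F2 l * (\sum_(k < n) g k * u l k) ^+ 2).
Proof.
rewrite /Hm.
under eq_bigr => i _ do under eq_bigr => j _ do rewrite mulr_sumr mulr_suml.
under eq_bigr => i _ do rewrite exchange_big.
rewrite exchange_big; apply: eq_bigr => l _.
have E : forall i j, g i * (a l * (F1 l * (2 * (i == j)%:R) + 2 * u l i * (F2 l * (2 * u l j)))) * g j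
  = (2 * a l * F1 l * g i) * (g j * (i == j)%:R) + (4 * a l * F2 l * (g i * u l i)) * (g j * u l j).
  by move=> i j; ring.
under eq_bigr => i _ do under eq_bigr => j _ do rewrite E.
under eq_bigr => i _ do rewrite big_split /= -!mulr_sumr sum_delta.
rewrite big_split /=.
have -> : \sum_(i < n) 2 * a l * F1 l * g i * g i = 2 * a l * F1 l * \sum_(k < n) g k ^+ 2.
  by rewrite mulr_sumr; apply: eq_bigr => i _; rewrite expr2 mulrA.
have -> : \sum_(i < n) 4 * a l * F2 l * (g i * u l i) * \sum_(j < n) g j * u l j =
   4 * a l * F2 l * (\sum_(k < n) g k * u l k) ^+ 2.
  rewrite -mulr_suml -mulr_sumr expr2 mulrA //.
ring.
Qed.

Lemma trace_sum (R : comRingType) n N (a F1 F2 : 'I_N -> R) (u : 'I_N -> 'I_n -> R) :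
  \sum_(i < n) Hm a F1 F2 u i i =
  \sum_(l < N) a l * (2 * F1 l * n%:R + 4 * F2 l * (\sum_(k < n) u l k ^+ 2)).
Proof.
rewrite /Hm exchange_big; apply: eq_bigr => l _.
have E : forall i : 'I_n, a l * (F1 l * (2 * (i == i)%:R) + 2 * u l i * (F2 l * (2 * u l i)))
  = 2 * a l * F1 l + 4 * a l * F2 l * u l i ^+ 2.
  by move=> i; rewrite eqxx /=; ring.
under eq_bigr => i _ do rewrite E.
rewrite big_split /= sumr_const card_ord -mulr_sumr -mulr_natr.
ring.
Qed.

Lemma key (R : realFieldType) n N (p : R) (a F1 F2 Q : 'I_N -> R) (u : 'I_N -> 'I_n -> R)
    (g : 'I_n -> R) :
  p != 1 -> (forall l, Q l = \sum_(k < n) u l k ^+ 2) -> (forall l, Q l != 0) ->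
  (forall l, F2 l = - (p + n%:R - 2) / (2 * (p - 1)) * F1 l / Q l) ->
  \sum_(k < n) g k ^+ 2 != 0 ->
  (p - 2) * (\sum_(i < n) \sum_(j < n) g i * Hm a F1 F2 u i j * g j) / (\sum_(k < n) g k ^+ 2)
    + \sum_(i < n) Hm a F1 F2 u i i
  = (p - 2) * (p + n%:R - 2) / (p - 1) *
    \sum_(l < N) a l * F1 l * 2 * (Q l * (\sum_(k < n) g k ^+ 2) - (\sum_(k < n) g k * u l k) ^+ 2)
       / (Q l * (\sum_(k < n) g k ^+ 2)).
Proof.
move=> p1 hQ hQ0 hF2 hG.
have p10 : p - 1 != 0 by rewrite subr_eq0.
rewrite quad_sum trace_sum.
set G := \sum_(k < n) g k ^+ 2.
rewrite mulr_sumr mulr_suml -big_split /= [RHS]mulr_sumr; apply: eq_bigr => l _.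
rewrite hF2 -hQ.
by field; rewrite hQ0 hG p10.
Qed.


Lemma quadE (R : comRingType) n (g : 'rV[R]_n) (M : 'M[R]_n) :
  (g *m M *m g^T) ord0 ord0 = \sum_(i < n) \sum_(j < n) g ord0 i * M i j * g ord0 j.
Proof.
rewrite mxE exchange_big; apply: eq_bigr => j _; rewrite mxE mulr_suml.
by apply: eq_bigr => i _; rewrite !mxE.
Qed.

Lemma cs_eq0_n1 (R : realFieldType) n (g u : 'I_n -> R) : n = 1%N ->
  (\sum_(k < n) g k ^+ 2) * (\sum_(k < n) u k ^+ 2) - (\sum_(k < n) g k * u k) ^+ 2 = 0.
Proof.
move=> n1; have := @pl_lagrange _ _ g u.
rewrite big1 => [|i _]; last first.
  rewrite big1 // => j _.
  have -> : j = i by apply: ord_inj; move: (ltn_ord i) (ltn_ord j) n1; lia.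
  by rewrite subrr expr0n.
by move/esym/eqP; rewrite mulf_eq0 pnatr_eq0 /= => /eqP.
Qed.

Lemma powR_sub1 (R : realType) (t e : R) : 0 < t -> t `^ (e - 1) = t `^ e / t.
Proof.
move=> t0; rewrite powRB; last by apply/implyP => _; rewrite gt_eqF.
by rewrite powRr1 // ltW.
Qed.

Unset Implicit Arguments. Set Strict Implicit.

Theorem lemma3p1 (R : realType) (n : nat) (p c : R) (N : nat)
  (a : 'I_N -> R) (y : 'I_N -> 'rV[R]_n) :
  (1 <= n)%N -> p != 1 -> 0 < c -> (0 < N)%N -> (forall i, 0 < a i) ->
  let V := @Vpot R n N p c a y in
  let k := (p - 2) * (p + n%:R - 2) / (p - 1) in
  forall x : 'rV[R]_n, (forall i, x != y i) -> grad V x != 0 ->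
    ((n == 1)%N || (p == 2) || (p + n%:R == 2) -> plaplacian p V x = 0) /\
    (~~ ((n == 1)%N || (p == 2) || (p + n%:R == 2)) ->
       (0 < k -> plaplacian p V x <= 0) /\ (k < 0 -> 0 <= plaplacian p V x)).
Proof.
move=> n1 p1 c0 N0 a0 V k x xy gV0.
set g := grad V x.
have p10 : p - 1 != 0 by rewrite subr_eq0.
pose F1 l := Fd n p c (qf (x - y l)).
pose F2 l := Fdd n p c (qf (x - y l)).
pose Q l := qf (x - y l).
pose u := fun l kk => ((x - y l) ord0 kk : R).
have Q0 : forall l, 0 < Q l by move=> l; apply: qf_gt0; rewrite subr_eq0.
have hH : forall i j, hessian V x i j = Hm a F1 F2 u i j.
  by move=> i j; rewrite /V hessianE.
have G0 : 0 < \sum_(kk < n) g ord0 kk ^+ 2 by exact: qf_gt0.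
set G := \sum_(kk < n) g ord0 kk ^+ 2 in G0.
have hG : enorm g ^+ 2 = G by rewrite /enorm sqr_sqrtr // ltW.
have P0 : 0 < enorm g `^ (p - 2) by apply: powR_gt0; rewrite /enorm sqrtr_gt0.
have hF2 : forall l, F2 l = - (p + n%:R - 2) / (2 * (p - 1)) * F1 l / Q l.
  move=> l; rewrite /F2 /Fdd /F1 /Fd /Q powR_sub1 //; last exact: Q0. rewrite /ee; ring.
pose S := \sum_(l < N) a l * F1 l * 2 *
   (Q l * G - (\sum_(kk < n) g ord0 kk * u l kk) ^+ 2) / (Q l * G).
have E : plaplacian p V x = k * (enorm g `^ (p - 2) * S).
  rewrite /plaplacian -/g hG /laplacian quadE /mxtrace.
  have -> : \sum_(i < n) \sum_(j < n) g ord0 i * hessian V x i j * g ord0 j =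
     \sum_(i < n) \sum_(j < n) g ord0 i * Hm a F1 F2 u i j * g ord0 j.
    by apply: eq_bigr => i _; apply: eq_bigr => j _; rewrite hH.
  have -> : \sum_(i < n) hessian V x i i = \sum_(i < n) Hm a F1 F2 u i i.
    by apply: eq_bigr => i _; rewrite hH.
  have K := (@key _ n N p a F1 F2 Q u (fun kk => g ord0 kk) p1 (fun l => erefl)
     (fun l => lt0r_neq0 (Q0 l)) hF2 (lt0r_neq0 G0)).
  rewrite /= -/G in K; rewrite K.
  rewrite /S /k; ring.
have Xge0 : forall l, 0 <= Q l * G - (\sum_(kk < n) g ord0 kk * u l kk) ^+ 2.
  move=> l; rewrite mulrC; exact: (cs_ge0 (fun kk => g ord0 kk) (u l)).
have F1lt0 : forall l, F1 l < 0.
  move=> l; rewrite /F1 /Fd; have := powR_gt0 (ee n p) (Q0 l); nra.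
have ST : enorm g `^ (p - 2) * S <= 0.
  rewrite pmulr_rle0 //; apply: sumr_le0 => l _.
  rewrite -mulrA; apply: mulr_le0_ge0.
    have : a l * F1 l < 0 by rewrite pmulr_rlt0.
    lra.
  apply: divr_ge0; first exact: Xge0.
  by apply: mulr_ge0; apply: ltW.
split.
  move=> /orP [/orP [/eqP en1|/eqP p2]|/eqP pn2]; rewrite E.
  - rewrite /S big1 ?mulr0 // => l _.
    have X0 : Q l * G - (\sum_(kk < n) g ord0 kk * u l kk) ^+ 2 = 0.
      by rewrite mulrC; exact: (cs_eq0_n1 (fun kk => g ord0 kk) (u l) en1).
    by rewrite X0 mulr0 mul0r.
  - by rewrite /k p2 subrr !mul0r.
  - by rewrite /k pn2 subrr mulr0 !mul0r.
move=> _; split => hk; rewrite E.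
  by rewrite pmulr_rle0.
by rewrite nmulr_rge0.
Qed.
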